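(* Let $\mathcal{D}=\mathrm{diag}(u_1,\dots,u_n)$ with all $u_j\neq0$, and let $\mathcal{N}=V_r^{-*}\mathcal{D}^*\mathcal{D}V_r^{-1}$. Then for all integers $\nu_1,\nu_2\ge0$, the pair $(P_\sharp,R_\sharp)$ minimizes $\|E_{\rm TG}^{\nu_1,\nu_2}(P,R)\|_{\mathcal N}$ over all $P,R\in\mathbb{C}^{n\times n_c}$ with $R^*AP$ invertible, i.e. $$(P_\sharp,R_\sharp)\in\operatorname*{argmin}_{P,R\in\mathbb{C}^{n\times n_c}}\|E_{\rm TG}^{\nu_1,\nu_2}(P,R)\|_{\mathcal N},$$ and the minimum value is $|1-\lambda_{n_c+1}|^{\nu_1+\nu_2}$ if $n_c<n$ and $0$ if $n_c=n$.
   Context: Let $A,M\in\mathbb{C}^{n\times n}$ be nonsingular with $M^{-1}A$ and $M^{-*}A^*$ diagonalizable. Let $V_r=[\bm v_{r,1},\dots,\bm v_{r,n}]$ and $V_l=[\bm v_{l,1},\dots,\bm v_{l,n}]$ be invertible matrices of right and left generalized eigenvectors of the pencil $(A,M)$, i.e. $AV_r=MV_r\Lambda$ and $V_l^*A=\Lambda V_l^*M$ with $\Lambda=\mathrm{diag}(\lambda_1,\dots,\lambda_n)$, chosen so that $V_l^*AV_r$ and $V_l^*MV_r$ are diagonal, and ordered so that $|1-\lambda_1|\ge\cdots\ge|1-\lambda_n|\ge0$. Fix $n_c\in\{1,\dots,n\}$. For $P,R\in\mathbb{C}^{n\times n_c}$ with $R^*AP$ invertible, $\Pi(P,R)=P(R^*AP)^{-1}R^*A$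 and $E_{\rm TG}^{\nu_1,\nu_2}(P,R)=(I-M^{-1}A)^{\nu_2}(I-\Pi(P,R))(I-M^{-1}A)^{\nu_1}$. $P_\sharp,R_\sharp\in\mathbb{C}^{n\times n_c}$ are any matrices with $\mathrm{range}(P_\sharp)=\mathrm{span}\{\bm v_{r,1},\dots,\bm v_{r,n_c}\}$, $\mathrm{range}(R_\sharp)=\mathrm{span}\{\bm v_{l,1},\dots,\bm v_{l,n_c}\}$. For Hermitian positive definite $\mathcal N$, $\|x\|_{\mathcal N}=(x^*\mathcal Nx)^{1/2}$ and $\|Z\|_{\mathcal N}=\max_{x\neq0}\|Zx\|_{\mathcal N}/\|x\|_{\mathcal N}$. *)

(* Defs.v *)
From HB Require Import structures.
From mathcomp Require Import all_boot all_order all_algebra.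
From mathcomp Require Import complex.
From mathcomp Require Import classical_sets reals.
Set Implicit Arguments. Unset Strict Implicit. Unset Printing Implicit Defensive.
Import Order.TTheory GRing.Theory Num.Theory.
Local Open Scope ring_scope.
Local Open Scope complex_scope.
Local Open Scope classical_set_scope.

Section Defs.
Variable R : realType.
Local Notation C := R[i].

Definition ctmx m p (Z : 'M[C]_(m, p)) : 'M[C]_(p, m) := (map_mx Num.conj Z)^T.

(* matrix power Z^k (iterated product; avoids the n = n'.+1 ring structure) *)
Definition mxpow n (Z : 'M[C]_n) (k : nat) : 'M[C]_n := iter k (mulmx Z) 1%:M.

Definition PiPR n nc (A : 'M[C]_n) (P Q : 'M[C]_(n, nc)) : 'M[C]_n :=
  P *m invmx (ctmx Q *m A *m P) *m ctmx Q *m A.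

Definition ETG n nc (A M : 'M[C]_n) (nu1 nu2 : nat) (P Q : 'M[C]_(n, nc)) : 'M[C]_n :=
  mxpow (1%:M - invmx M *m A) nu2 *m (1%:M - PiPR A P Q)
    *m mxpow (1%:M - invmx M *m A) nu1.

(* ||x||_N = (x^* N x)^{1/2}  (x^* N x is real for N Hermitian p.d.) *)
Definition vnorm n (N : 'M[C]_n) (x : 'cV[C]_n) : R :=
  Num.sqrt (complex.Re ((ctmx x *m N *m x) 0 0)).

Definition opnorm n (N : 'M[C]_n) (Z : 'M[C]_n) : R :=
  sup [set r : R | exists2 x : 'cV[C]_n, x != 0 & r = vnorm N (Z *m x) / vnorm N x].

(* span of the first nc columns of V, as a row space of transposed columns *)
Definition first_cols_span n (nc : nat) (V : 'M[C]_n) :=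
  (\sum_(j < n | (j < nc)%N) <<(col j V)^T>>)%MS.

End Defs.

(* Main.v *)
Require Import Defs.
From HB Require Import structures.
From mathcomp Require Import all_boot all_order all_algebra.
From mathcomp Require Import complex.
From mathcomp Require Import classical_sets reals.
From mathcomp Require Import zify.
Set Implicit Arguments. Unset Strict Implicit. Unset Printing Implicit Defensive.
Import Order.TTheory GRing.Theory Num.Theory.
Local Open Scope ring_scope.
Local Open Scope complex_scope.

Section Aux.
Variable R : realType.
Local Notation C := R[i].

Lemma ctmx_mul m p q (X : 'M[C]_(m, p)) (Y : 'M[C]_(p, q)) :
  ctmx (X *m Y) = ctmx Y *m ctmx X.
Proof. by rewrite /ctmx map_mxM trmx_mul. Qed.

Lemma ctmxT m p (X : 'M[C]_(m, p)) : ctmx X = map_mx Num.conj X^T.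
Proof. by rewrite /ctmx map_trmx. Qed.

Lemma RCX (x : R) k : (x%:C) ^+ k = (x ^+ k)%:C :> C.
Proof. by rewrite rmorphXn. Qed.

Lemma RCM (x y : R) : (x%:C) * (y%:C) = (x * y)%:C :> C.
Proof. by rewrite rmorphM. Qed.

Definition sq n (w : 'cV[C]_n) : C := \sum_i `|w i 0| ^+ 2.
Definition sqR n (w : 'cV[C]_n) : R := complex.Re (sq w).
Definition nrm n (w : 'cV[C]_n) : R := Num.sqrt (sqR w).

Lemma ctmx_sq n (w : 'cV[C]_n) : (ctmx w *m w) 0 0 = sq w.
Proof.
rewrite !mxE /sq; apply: eq_bigr => i _.
by rewrite normCKC !mxE.
Qed.

Lemma sq_ge0 n (w : 'cV[C]_n) : 0 <= sq w.
Proof. by apply: sumr_ge0 => i _; rewrite exprn_ge0. Qed.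

Lemma ge0_ReE (z : C) : 0 <= z -> z = (complex.Re z)%:C.
Proof.
case: z => a b; rewrite lecE /= => /andP [/eqP -> _]. by [].
Qed.

Lemma ge0_Re (z : C) : 0 <= z -> 0 <= complex.Re z.
Proof. by case: z => a b; rewrite lecE /= => /andP [_ ->]. Qed.

Lemma le_Re (a b : C) : a <= b -> complex.Re a <= complex.Re b.
Proof. by rewrite lecE => /andP [_ ->]. Qed.

Lemma sqE n (w : 'cV[C]_n) : sq w = (sqR w)%:C.
Proof. exact/ge0_ReE/sq_ge0. Qed.

Lemma sqR_ge0 n (w : 'cV[C]_n) : 0 <= sqR w.
Proof. exact/ge0_Re/sq_ge0. Qed.

Lemma sq_eq0 n (w : 'cV[C]_n) : sq w = 0 -> w = 0.
Proof.
move=> /eqP; rewrite psumr_eq0 => [/allP H|i _]; last by rewrite exprn_ge0.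
apply/matrixP => i j; rewrite (ord1 j) mxE.
have := H i (mem_index_enum _); rewrite expf_eq0 /= normr_eq0.
by move/eqP.
Qed.

Lemma nrm_gt0 n (w : 'cV[C]_n) : w != 0 -> 0 < nrm w.
Proof.
move=> wn0; rewrite /nrm sqrtr_gt0 lt_def sqR_ge0 andbT.
apply/negP => /eqP h; move/negP: wn0; apply; apply/eqP/sq_eq0.
by rewrite sqE h.
Qed.

Lemma nrm_le n p (u : 'cV[C]_n) (w : 'cV[C]_p) (m : R) : 0 <= m ->
  sq u <= (m%:C) ^+ 2 * sq w -> nrm u <= m * nrm w.
Proof.
move=> m0; rewrite (sqE u) (sqE w) RCX RCM lecR => h.
rewrite /nrm -(ger0_norm m0) -sqrtr_sqr -sqrtrM ?exprn_ge0 //.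
by rewrite ler_sqrt // mulr_ge0 ?exprn_ge0 ?sqR_ge0.
Qed.

Lemma nrm_ge n p (u : 'cV[C]_n) (w : 'cV[C]_p) (m : R) : 0 <= m ->
  (m%:C) ^+ 2 * sq w <= sq u -> m * nrm w <= nrm u.
Proof.
move=> m0; rewrite (sqE u) (sqE w) RCX RCM lecR => h.
rewrite /nrm -(ger0_norm m0) -sqrtr_sqr -sqrtrM ?exprn_ge0 //.
by rewrite ler_sqrt // sqR_ge0.
Qed.


Lemma normr_le_nrm n (w : 'cV[C]_n) i : `|w i 0| <= (nrm w)%:C.
Proof.
have h0 : 0 <= (nrm w)%:C by rewrite ler0c sqrtr_ge0.
rewrite -(@ler_pXn2r _ 2) // ?nnegrE //.
have -> : (nrm w)%:C ^+ 2 = sq w.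
  by rewrite RCX /nrm sqr_sqrtr ?sqR_ge0 // (sqE w).
rewrite /sq (bigD1 i) //= lerDl; apply: sumr_ge0 => j _; exact: exprn_ge0.
Qed.

Lemma sq_bound n (K : 'M[C]_n) : exists2 b : R, 0 <= b &
  forall w, sq (K *m w) <= (b%:C) ^+ 2 * sq w.
Proof.
pose k i := \sum_j `|K i j|.
have k0 i : 0 <= k i by apply: sumr_ge0 => j _.
pose s := \sum_i k i ^+ 2.
have s0 : 0 <= s by apply: sumr_ge0 => i _; exact: exprn_ge0.
exists (Num.sqrt (complex.Re s)); first exact: sqrtr_ge0.
move=> w; rewrite RCX sqr_sqrtr ?ge0_Re // -ge0_ReE //.
have h0 : 0 <= (nrm w)%:C by rewrite ler0c sqrtr_ge0.
have -> : sq w = ((nrm w)%:C) ^+ 2.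
  by rewrite RCX /nrm sqr_sqrtr ?sqR_ge0 // (sqE w).
rewrite /sq /s mulr_suml; apply: ler_sum => i _.
rewrite -exprMn; apply: lerXn2r; rewrite ?nnegrE ?mulr_ge0 //.
rewrite mxE (le_trans (ler_norm_sum _ _ _)) // /k mulr_suml.
apply: ler_sum => j _; rewrite normrM; apply: ler_wpM2l => //.
exact: normr_le_nrm.
Qed.

Definition rs n (K : 'M[C]_n) : set R :=
  [set r | exists2 w : 'cV[C]_n, w != 0 & r = nrm (K *m w) / nrm w].

Lemma rs_has_sup n (K : 'M[C]_n) : (0 < n)%N -> has_sup (rs K).
Proof.
move=> n0; split.
  have w0 : (const_mx 1 : 'cV[C]_n) != 0.
    apply/negP => /eqP/matrixP/(_ (Ordinal n0) 0); rewrite !mxE.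
    by move/eqP; rewrite oner_eq0.
  by exists (nrm (K *m const_mx 1) / nrm (const_mx 1 : 'cV[C]_n)); exists (const_mx 1).
have [b b0 hb] := sq_bound K.
exists b => r [w w0 ->].
rewrite ler_pdivrMr ?nrm_gt0 //; exact: nrm_le.
Qed.

Lemma sup_ge n (K : 'M[C]_n) (w : 'cV[C]_n) (m : R) : (0 < n)%N ->
  w != 0 -> 0 <= m -> (m%:C) ^+ 2 * sq w <= sq (K *m w) -> m <= sup (rs K).
Proof.
move=> n0 w0 m0 h.
apply: (le_trans _ (sup_upper_bound (rs_has_sup K n0) _)); last first.
  by exists w.
rewrite ler_pdivlMr ?nrm_gt0 //; exact: nrm_ge.
Qed.

Lemma sup_le n (K : 'M[C]_n) (m : R) : (0 < n)%N -> 0 <= m ->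
  (forall w, sq (K *m w) <= (m%:C) ^+ 2 * sq w) -> sup (rs K) <= m.
Proof.
move=> n0 m0 h; apply: ge_sup; first by case: (rs_has_sup K n0).
move=> r [w w0 ->]; rewrite ler_pdivrMr ?nrm_gt0 //; exact: nrm_le.
Qed.

Lemma opnorm_conj n (S Si Z : 'M[C]_n) : S *m Si = 1%:M -> Si *m S = 1%:M ->
  opnorm (ctmx S *m S) Z = sup (rs (S *m Z *m Si)).
Proof.
move=> SSi SiS.
have vn x : vnorm (ctmx S *m S) x = nrm (S *m x).
  rewrite /vnorm /nrm /sqR -ctmx_sq.
  by rewrite ctmx_mul !mulmxA.
rewrite /opnorm; congr sup; rewrite eqEsubset; split => r [x x0 ->].
  exists (S *m x).
    apply: contraNneq x0 => h; by rewrite -[x]mul1mx -SiS -mulmxA h mulmx0.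
  have e : S *m Z *m Si *m (S *m x) = S *m (Z *m x).
    by rewrite -!mulmxA (mulmxA Si) SiS mul1mx.
  by rewrite !vn e.
exists (Si *m x).
  apply: contraNneq x0 => h; by rewrite -[x]mul1mx -SSi -mulmxA h mulmx0.
by rewrite !vn !mulmxA SSi mul1mx.
Qed.

Lemma diag_mul n (a b : 'rV[C]_n) :
  diag_mx a *m diag_mx b = diag_mx (\row_j (a 0 j * b 0 j)).
Proof.
apply/matrixP => i j; rewrite mul_diag_mx !mxE.
by rewrite mulrnAr.
Qed.

Lemma diag_mulC n (a b : 'rV[C]_n) :
  diag_mx a *m diag_mx b = diag_mx b *m diag_mx a.
Proof. by rewrite !diag_mul; congr diag_mx; apply/rowP => j; rewrite !mxE mulrC. Qed.

Lemma pid_diag n r : pid_mx r = diag_mx (\row_(j < n) ((j < r)%N)%:R) :> 'M[C]_n.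
Proof.
apply/matrixP => i j; rewrite !mxE.
case: (eqVneq i j) => [->|ne]; first by rewrite eqxx /=.
have -> : (i == j :> nat) = false by apply/negbTE.
by rewrite mulr0n.
Qed.

Lemma sq_diag n (d : 'rV[C]_n) (w : 'cV[C]_n) :
  sq (diag_mx d *m w) = \sum_i `|d 0 i| ^+ 2 * `|w i 0| ^+ 2.
Proof.
by apply: eq_bigr => i _; rewrite mul_diag_mx mxE normrM exprMn.
Qed.

Lemma diag_upper n (d : 'rV[C]_n) (m : C) (w : 'cV[C]_n) : 0 <= m ->
  (forall i, `|d 0 i| <= m) -> sq (diag_mx d *m w) <= m ^+ 2 * sq w.
Proof.
move=> m0 h; rewrite sq_diag /sq mulr_sumr; apply: ler_sum => i _.
apply: ler_wpM2r; first exact: exprn_ge0.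
by apply: lerXn2r; rewrite ?nnegrE.
Qed.

Lemma diag_lower n (d : 'rV[C]_n) (m : C) (w : 'cV[C]_n) : 0 <= m ->
  (forall i, w i 0 != 0 -> m <= `|d 0 i|) -> m ^+ 2 * sq w <= sq (diag_mx d *m w).
Proof.
move=> m0 h; rewrite sq_diag /sq mulr_sumr; apply: ler_sum => i _.
case: (eqVneq (w i 0) 0) => [->|wn0]; first by rewrite normr0 expr0n !mulr0.
apply: ler_wpM2r; first exact: exprn_ge0.
by apply: lerXn2r; rewrite ?nnegrE // h.
Qed.

Lemma mxpow_conj n (S Si T : 'M[C]_n) k : Si *m S = 1%:M -> S *m Si = 1%:M ->
  S *m mxpow T k *m Si = mxpow (S *m T *m Si) k.
Proof.
move=> SiS SSi; elim: k => [|k IH] /=; first by rewrite /mxpow /= mulmx1.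
rewrite /mxpow /= -/(mxpow T k) -/(mxpow _ k) -IH.
by rewrite !mulmxA -(mulmxA _ Si S) SiS mulmx1.
Qed.

Lemma mxpow_diag n (d : 'rV[C]_n) k :
  mxpow (diag_mx d) k = diag_mx (\row_j (d 0 j ^+ k)).
Proof.
elim: k => [|k IH].
  by rewrite /mxpow /= -diag_const_mx; congr diag_mx; apply/rowP => j; rewrite !mxE.
rewrite /mxpow /= -/(mxpow _ k) IH diag_mul; congr diag_mx.
by apply/rowP => j; rewrite !mxE exprS.
Qed.


Lemma row_pidV n nc (V : 'M[C]_n) j :
  row j (pid_mx nc *m V^T) = if (j < nc)%N then (col j V)^T else 0.
Proof.
apply/rowP => k; rewrite pid_diag mul_diag_mx !mxE.
by case: (j < nc)%N; rewrite ?mul1r ?mul0r // !mxE.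
Qed.

Lemma span_eq n nc (V : 'M[C]_n) : (first_cols_span nc V == (pid_mx nc : 'M[C]_n) *m V^T)%MS.
Proof.
apply/andP; split.
  apply/sumsmx_subP => j hj; rewrite (genmxE ((col j V)^T)).
  by have := row_sub j ((pid_mx nc : 'M[C]_n) *m V^T); rewrite row_pidV hj.
apply/row_subP => j; rewrite row_pidV; case: ifP => hj; last exact: sub0mx.
by apply: (sumsmx_sup j) => //; rewrite genmxE.
Qed.

Lemma ctmx_unit n (X : 'M[C]_n) : (ctmx X \in unitmx) = (X \in unitmx).
Proof. by rewrite /ctmx unitmx_tr map_unitmx. Qed.

Lemma pidK n nc : (pid_mx nc : 'M[C]_n) *m (pid_mx nc : 'M[C]_n) = pid_mx nc.
Proof. by rewrite mul_pid_mx minnn; apply/matrixP => i j; rewrite !mxE leq_min ltn_ord. Qed.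

Lemma sharp_facts n nc (A Vr Vl : 'M[C]_n) (Ps Rs : 'M[C]_(n, nc)) :
  A \in unitmx -> Vr \in unitmx -> Vl \in unitmx ->
  is_diag_mx (ctmx Vl *m A *m Vr) -> (nc <= n)%N ->
  (Ps^T == first_cols_span nc Vr)%MS -> (Rs^T == first_cols_span nc Vl)%MS ->
  ctmx Rs *m A *m Ps \in unitmx /\ PiPR A Ps Rs *m Vr = Vr *m pid_mx nc.
Proof.
move=> Au Vru Vlu Gd ncn /andP [hP1 hP2] /andP [hR1 hR2].
have /andP [sp1 sp2] := span_eq nc Vr.
have /andP [sl1 sl2] := span_eq nc Vl.
have /submxP [Zp EZp] := submx_trans sp2 hP2.
have /submxP [Yr EYr] := submx_trans hR1 sl1.
have /submxP [Zr EZr] := submx_trans sl2 hR2.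
set P := pid_mx nc : 'M[C]_n.
set G := ctmx Vl *m A *m Vr.
have [g Eg] : exists g, G = diag_mx g by apply/diag_mxP.
have PG : P *m G = G *m P by rewrite /P Eg pid_diag diag_mulC.
have Eq1 : ctmx Rs = map_mx Num.conj Yr *m P *m ctmx Vl.
  by rewrite ctmxT EYr !map_mxM map_pid_mx -map_trmx mulmxA.
have Eq2 : P *m ctmx Vl = map_mx Num.conj Zr *m ctmx Rs.
  have := congr1 (map_mx Num.conj) EZr.
  by rewrite !map_mxM map_pid_mx -map_trmx => ->; rewrite ctmxT.
have Eq3 : Vr *m P = Ps *m Zp^T.
  have := congr1 trmx EZp; rewrite !trmx_mul tr_pid_mx !trmxK => <-; done.
have PGP : P *m G *m P = P *m G by rewrite PG -mulmxA pidK.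
have Eqi : ctmx Rs *m A *m Vr = ctmx Rs *m A *m Vr *m P.
  have -> : ctmx Rs *m A *m Vr = map_mx Num.conj Yr *m (P *m G).
    by rewrite Eq1 /G !mulmxA.
  by rewrite -mulmxA PGP.
have Gu : G \in unitmx by rewrite /G !unitmx_mul ctmx_unit Vlu Au Vru.
have EX : P *m G *m P = map_mx Num.conj Zr *m (ctmx Rs *m A *m Ps) *m Zp^T.
  have E1 : P *m G = map_mx Num.conj Zr *m (ctmx Rs *m A *m Vr).
    by rewrite /G (mulmxA P (ctmx Vl *m A)) (mulmxA P) Eq2 !mulmxA.
  have E2 : ctmx Rs *m A *m Vr *m P = (ctmx Rs *m A *m Ps) *m Zp^T by rewrite -mulmxA Eq3 !mulmxA.
  by rewrite PGP E1 Eqi E2 mulmxA.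
have rX : \rank (ctmx Rs *m A *m Ps) = nc.
  apply/eqP; rewrite eqn_leq rank_leq_row /=.
  have rP : \rank P = nc by rewrite /P rank_pid_mx.
  apply: (@leq_trans (\rank P)); first by rewrite rP.
  have -> : P = invmx G *m (P *m G *m P) by rewrite PGP PG mulKmx.
  apply: (leq_trans (mxrankM_maxr _ _)); rewrite EX.
  apply: (leq_trans (mxrankM_maxl _ _)); exact: mxrankM_maxr.
have Xu : (ctmx Rs *m A *m Ps) \in unitmx by rewrite -row_free_unit /row_free rX.
split => //.
rewrite /PiPR -!mulmxA [ctmx Rs *m (A *m Vr)]mulmxA Eqi.
rewrite -(mulmxA _ Vr P) Eq3 (mulmxA (ctmx Rs *m A)) -(mulmxA (ctmx Rs) A Ps).
by rewrite mulKmx ?Eq3 // mulmxA.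
Qed.


Lemma ker_vec n nc (F : 'M[C]_(nc, n)) : (nc < n)%N ->
  exists2 y : 'cV[C]_n, y != 0 &
    (F *m y = 0 /\ forall j : 'I_n, (nc < j)%N -> y j 0 = 0).
Proof.
move=> ncn.
pose W := pid_mx nc.+1 : 'M[C]_n.
pose Kf := kermx F^T.
have rW : \rank W = nc.+1 by rewrite /W rank_pid_mx.
have rK : \rank Kf = (n - \rank F^T)%N by rewrite mxrank_ker.
have rF : (\rank F^T <= nc)%N by exact: rank_leq_col.
have hc := mxrank_sum_cap W Kf.
have hs := rank_leq_col (W + Kf)%MS.
have : (W :&: Kf)%MS != 0.
  rewrite -mxrank_eq0; apply/eqP => h0; move: hc hs; rewrite h0 rW rK.
  move: rF; clear; move=> rF hc hs; lia.
case/rowV0Pn => v; rewrite sub_capmx => /andP [vW vK] v0.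
exists v^T; first by rewrite trmx_eq0.
split.
  by rewrite -[F]trmxK -trmx_mul (sub_kermxP vK) trmx0.
move=> j hj; rewrite mxE.
case/submxP: vW => D ->.
by rewrite /W pid_diag mul_mx_diag !mxE ltnS leqNgt hj mulr0.
Qed.

Lemma gen_lower n nc (L1 L2 : 'rV[C]_n) (Pi' : 'M[C]_n) (F : 'M[C]_(nc, n))
  (m1 m2 : C) : (nc < n)%N -> (forall y : 'cV[C]_n, F *m y = 0 -> Pi' *m y = 0) ->
  0 <= m1 -> 0 <= m2 -> m1 != 0 ->
  (forall j : 'I_n, (j <= nc)%N -> m1 <= `|L1 0 j| /\ m2 <= `|L2 0 j|) ->
  exists2 w : 'cV[C]_n, w != 0 &
    (m1 * m2) ^+ 2 * sq w <= sq (diag_mx L2 *m (1%:M - Pi') *m diag_mx L1 *m w).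
Proof.
move=> ncn hPi m10 m20 m1n0 hL.
have [y y0 [Fy ysupp]] := ker_vec F ncn.
pose w := diag_mx (\row_j (L1 0 j)^-1) *m y.
have L1n0 (j : 'I_n) : (j <= nc)%N -> L1 0 j != 0.
  move=> hj; have [h _] := hL j hj; apply: contra_neq m1n0 => e.
  by apply/eqP; rewrite eq_le m10 andbT; move: h; rewrite e normr0.
have ysup (j : 'I_n) : y j 0 != 0 -> (j <= nc)%N.
  by move=> h; rewrite leqNgt; apply/negP => /ysupp; apply/eqP.
have Lw : diag_mx L1 *m w = y.
  apply/matrixP => i k; rewrite (ord1 k) /w mulmxA diag_mul mul_diag_mx !mxE.
  case: (eqVneq (y i 0) 0) => [->|yn0]; first by rewrite mulr0.
  by rewrite mulfV ?mul1r // L1n0 // ysup.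
have w0 : w != 0 by apply: contra_neq y0 => e; rewrite -Lw e mulmx0.
exists w => //.
rewrite -mulmxA Lw -mulmxA mulmxBl mul1mx (hPi _ Fy) subr0.
apply: (le_trans _ (diag_lower (d:=L2) (w:=y) m20 _)); last first.
  by move=> j /ysup /hL [].
rewrite exprMn [m1 ^+ 2 * _]mulrC -mulrA; apply: ler_wpM2l; first exact: exprn_ge0.
rewrite -Lw; apply: diag_lower => // j wj.
apply: (proj1 (hL j _)); apply: ysup; rewrite -Lw mul_diag_mx mxE mulf_neq0 //.
by move: wj; rewrite /w mul_diag_mx !mxE; apply: contra_neq => ->; rewrite invr0 mul0r.
Qed.


Lemma conj3 n (S Si X Y Z : 'M[C]_n) : Si *m S = 1%:M ->
  S *m (X *m Y *m Z) *m Si = (S *m X *m Si) *m (S *m Y *m Si) *m (S *m Z *m Si).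
Proof.
move=> SiS; rewrite !mulmxA -(mulmxA (S *m X) Si S) SiS mulmx1.
by rewrite -(mulmxA (S *m X *m Y) Si S) SiS mulmx1.
Qed.

Lemma conjB1 n (S Si Y : 'M[C]_n) : S *m Si = 1%:M ->
  S *m (1%:M - Y) *m Si = 1%:M - S *m Y *m Si.
Proof. by move=> SSi; rewrite mulmxBr mulmxBl mulmx1 SSi. Qed.

Lemma one_sub_diag n (a : 'rV[C]_n) :
  1%:M - diag_mx a = diag_mx (\row_j (1 - a 0 j)).
Proof.
apply/matrixP => i j; rewrite !mxE.
by case: (i == j); rewrite ?mulr1n ?mulr0n ?subr0.
Qed.

Lemma exists_nz n : (0 < n)%N -> exists w : 'cV[C]_n, w != 0.
Proof.
move=> n0; exists (const_mx 1).
apply/negP => /eqP/matrixP/(_ (Ordinal n0) 0); rewrite !mxE.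
by move/eqP; rewrite oner_eq0.
Qed.

End Aux.

Theorem theorem3p5 (R : realType) (n nc : nat)
  (A M : 'M[R[i]]_n)
  (Vr Vl : 'M[R[i]]_n) (lam : 'I_n -> R[i]) (u : 'I_n -> R[i])
  (Ps Rs : 'M[R[i]]_(n, nc)) (nu1 nu2 : nat) :
  A \in unitmx -> M \in unitmx ->
  diagonalizable (invmx M *m A) ->
  diagonalizable (invmx (ctmx M) *m ctmx A) ->
  Vr \in unitmx -> Vl \in unitmx ->
  A *m Vr = M *m Vr *m diag_mx (\row_j lam j) ->
  ctmx Vl *m A = diag_mx (\row_j lam j) *m ctmx Vl *m M ->
  is_diag_mx (ctmx Vl *m A *m Vr) ->
  is_diag_mx (ctmx Vl *m M *m Vr) ->
  (forall i j : 'I_n, (i <= j)%N -> `|1 - lam j| <= `|1 - lam i|) ->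
  (1 <= nc <= n)%N ->
  (Ps^T == first_cols_span nc Vr)%MS ->
  (Rs^T == first_cols_span nc Vl)%MS ->
  (forall j, u j != 0) ->
  let N := ctmx (invmx Vr) *m ctmx (diag_mx (\row_j u j))
             *m diag_mx (\row_j u j) *m invmx Vr in
  [/\ ctmx Rs *m A *m Ps \in unitmx,
      (forall P Q : 'M[R[i]]_(n, nc), ctmx Q *m A *m P \in unitmx ->
         opnorm N (ETG A M nu1 nu2 Ps Rs) <= opnorm N (ETG A M nu1 nu2 P Q)),
      (forall j : 'I_n, nat_of_ord j = nc ->
         (opnorm N (ETG A M nu1 nu2 Ps Rs))%:C = `|1 - lam j| ^+ (nu1 + nu2))
    & (nc = n -> opnorm N (ETG A M nu1 nu2 Ps Rs) = 0)].
Proof.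
move=> Au Mu _ _ Vru Vlu hAV _ Gd _ hord /andP [nc1 ncn] hP hR u0 N.
have n0 : (0 < n)%N by apply: leq_trans ncn.
have [Xu PiV] := sharp_facts Au Vru Vlu Gd ncn hP hR.
pose D := diag_mx (\row_j u j).
pose Di := diag_mx (\row_j (u j)^-1).
have DDi : D *m Di = 1%:M.
  rewrite diag_mul -diag_const_mx; congr diag_mx; apply/rowP => j.
  by rewrite !mxE mulfV.
have DiD : Di *m D = 1%:M.
  rewrite diag_mul -diag_const_mx; congr diag_mx; apply/rowP => j.
  by rewrite !mxE mulVf.
pose S := D *m invmx Vr.
pose Si := Vr *m Di.
have SSi : S *m Si = 1%:M.
  by rewrite /S /Si mulmxA -(mulmxA D) mulVmx // mulmx1.
have SiS : Si *m S = 1%:M.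
  by rewrite /S /Si mulmxA -(mulmxA Vr) DiD mulmx1 mulmxV.
have HN : N = ctmx S *m S by rewrite /N /S ctmx_mul !mulmxA.
have ON Z : opnorm N Z = sup (rs (S *m Z *m Si)) by rewrite HN (opnorm_conj Z SSi SiS).
pose Lk k := \row_j ((1 - lam j) ^+ k) : 'rV[R[i]]_n.
have ST : S *m (1%:M - invmx M *m A) *m Si = diag_mx (Lk 1%N).
  rewrite conjB1 //.
  have h1 : invmx M *m A *m Vr = Vr *m diag_mx (\row_j lam j).
    by rewrite -mulmxA hAV -!mulmxA mulKmx.
  have -> : S *m (invmx M *m A) *m Si = diag_mx (\row_j lam j).
    have -> : S *m (invmx M *m A) *m Si =
        D *m (invmx Vr *m (invmx M *m A *m Vr)) *m Di by rewrite /S /Si !mulmxA.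
    by rewrite h1 mulKmx // diag_mulC -mulmxA DDi mulmx1.
  rewrite one_sub_diag; congr diag_mx; apply/rowP => j; by rewrite !mxE expr1.
have SLk k : S *m mxpow (1%:M - invmx M *m A) k *m Si = diag_mx (Lk k).
  rewrite mxpow_conj // ST mxpow_diag; congr diag_mx; apply/rowP => j.
  by rewrite !mxE expr1.
have Kform (P Q : 'M[R[i]]_(n, nc)) : S *m ETG A M nu1 nu2 P Q *m Si =
    diag_mx (Lk nu2) *m (1%:M - S *m PiPR A P Q *m Si) *m diag_mx (Lk nu1).
  by rewrite /ETG conj3 // !SLk conjB1.
have SPiS : S *m PiPR A Ps Rs *m Si = pid_mx nc.
  have -> : S *m PiPR A Ps Rs *m Si =
      D *m (invmx Vr *m (PiPR A Ps Rs *m Vr)) *m Di by rewrite /S /Si !mulmxA.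
  by rewrite PiV mulKmx // pid_diag diag_mulC -mulmxA DDi mulmx1.
pose c := \row_j ((1 - lam j) ^+ nu2 * (1 - ((j < nc)%N)%:R) * (1 - lam j) ^+ nu1)
  : 'rV[R[i]]_n.
have Ks : S *m ETG A M nu1 nu2 Ps Rs *m Si = diag_mx c.
  rewrite Kform SPiS pid_diag one_sub_diag !diag_mul; congr diag_mx.
  by apply/rowP => j; rewrite !mxE.
have nonneg (P Q : 'M[R[i]]_(n, nc)) : 0 <= opnorm N (ETG A M nu1 nu2 P Q).
  have [w w0] := @exists_nz R n n0.
  rewrite ON; apply: (sup_ge n0 w0) => //.
  by rewrite expr0n /= mul0r sq_ge0.
case: (ltnP nc n) => [ltn|gen].
  pose j0 := Ordinal ltn.
  pose mC := `|1 - lam j0| ^+ (nu1 + nu2).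
  have mC0 : 0 <= mC by rewrite exprn_ge0.
  have EmC := ge0_ReE mC0.
  have mR0 := ge0_Re mC0.
  have Es : opnorm N (ETG A M nu1 nu2 Ps Rs) = complex.Re mC.
    rewrite ON Ks; apply/eqP; rewrite eq_le; apply/andP; split.
      apply: sup_le => // w; rewrite -EmC; apply: diag_upper => // j.
      rewrite mxE; case: ltnP => hj; first by rewrite subrr mulr0 mul0r normr0.
      rewrite subr0 mulr1 normrM !normrX -exprD addnC.
      by apply: lerXn2r; rewrite ?nnegrE ?normr_ge0 //; apply: hord.
    have w0 : (delta_mx j0 0 : 'cV[R[i]]_n) != 0.
      apply/negP => /eqP/matrixP/(_ j0 0); rewrite !mxE !eqxx /=.
      by move/eqP; rewrite oner_eq0.
    apply: (sup_ge n0 w0) => //; rewrite -EmC; apply: diag_lower => // i.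
    rewrite mxE; case: (eqVneq i j0) => [-> _|ne]; last by rewrite andFb mulr0n eqxx.
    have hj0 : (j0 < nc)%N = false by rewrite /= ltnn.
    rewrite mxE hj0 subr0 mulr1 normrM !normrX -exprD [(nu2 + nu1)%N]addnC.
    exact: lexx.
  split; [exact: Xu | | |].
  - move=> P Q XQu; apply: (@le_trans _ _ (complex.Re mC)); first by rewrite Es.
    case: (eqVneq mC 0) => [mCz|mCn0].
      by rewrite mCz /= nonneg.
    pose m1 := `|1 - lam j0| ^+ nu1.
    pose m2 := `|1 - lam j0| ^+ nu2.
    have Em : mC = m1 * m2 by rewrite /mC /m1 /m2 exprD.
    have m1n0 : m1 != 0 by apply: contra_neq mCn0 => h; rewrite Em h mul0r.
    have hPi (y : 'cV[R[i]]_n) : ctmx Q *m A *m Si *m y = 0 ->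
        S *m PiPR A P Q *m Si *m y = 0.
      move=> Fy; rewrite /PiPR.
      have -> : S *m (P *m invmx (ctmx Q *m A *m P) *m ctmx Q *m A) *m Si *m y =
        S *m P *m invmx (ctmx Q *m A *m P) *m (ctmx Q *m A *m Si *m y).
        by rewrite !mulmxA.
      by rewrite Fy mulmx0.
    have hL (j : 'I_n) : (j <= nc)%N -> m1 <= `|Lk nu1 0 j| /\ m2 <= `|Lk nu2 0 j|.
      move=> hj; rewrite !mxE !normrX; split; apply: lerXn2r;
        rewrite ?nnegrE ?normr_ge0 //; exact: hord.
    have [w w0 hw] := gen_lower ltn hPi (exprn_ge0 _ (normr_ge0 _))
      (exprn_ge0 _ (normr_ge0 _)) m1n0 hL.
    rewrite ON Kform; apply: (sup_ge n0 w0) => //.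
    by rewrite -EmC Em.
  - move=> j hj; rewrite Es -EmC /mC; congr (`|1 - lam _| ^+ _).
    by apply: val_inj.
  - move=> e; exfalso; have := ltn; by rewrite e ltnn.
have encn : nc = n by apply/eqP; rewrite eqn_leq ncn gen.
have Es : opnorm N (ETG A M nu1 nu2 Ps Rs) = 0.
  apply/eqP; rewrite eq_le nonneg andbT ON Ks.
  apply: sup_le => // w; apply: diag_upper => // j.
  rewrite mxE; have -> : (j < nc)%N = true by rewrite encn ltn_ord.
  by rewrite subrr mulr0 mul0r normr0 ler0c.
split; [exact: Xu | | | exact: (fun _ => Es)].
- move=> P Q _; apply: (@le_trans _ _ 0); [by rewrite Es | exact: nonneg].
- move=> j hj; have := ltn_ord j; rewrite hj => h.
  by rewrite encn ltnn in h.
Qed.
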